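(* Let $\alpha\in\mathbb{Q}(\sqrt2)$ be an algebraic $d$-number whose norm $\mathcal{N}_{\mathbb{Q}(\sqrt2)/\mathbb{Q}}(\alpha)$ is a power of $2$. If every Galois conjugate of $\alpha$ is at least $2$ (i.e.\ $\alpha$ is totally $\geq 2$) and $\alpha-1$ is also an algebraic $d$-number, then $\alpha\in\mathbb{Z}$.
   Context: An algebraic $d$-number is an algebraic integer $\alpha$ such that the ideal generated by $\alpha$ in the ring of all algebraic integers is invariant under $\mathrm{Gal}(\overline{\mathbb{Q}}/\mathbb{Q})$. For $\alpha$ of degree $2$ this is equivalent to $\alpha^2$ being an integer multiple of an algebraic unit, and also to $\mathcal{N}(\alpha)$ dividing $\mathcal{T}(\alpha)^2$, where $\mathcal{N},\mathcal{T}$ are the norm and trace of $\mathbb{Q}(\alpha)/\mathbb{Q}$. Every rational integer is an algebraic $d$-number. *)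

(* Defs.v *)
From mathcomp Require Import all_boot all_order all_algebra all_field.
Set Implicit Arguments. Unset Strict Implicit. Unset Printing Implicit Defensive.
Import GRing.Theory Num.Theory.
Local Open Scope ring_scope.

(* We work inside algC, the algebraic closure of Q (a copy of Qbar);
   Gal(Qbar/Q) = the ring automorphisms of algC, i.e. rmorphisms algC -> algC
   (every ring endomorphism of algC is an automorphism fixing Q). *)

Definition princ_ideal (alpha : algC) : algC -> Prop :=
  fun x => exists2 y, y \in Aint & x = alpha * y.

(* Algebraic d-number: an algebraic integer alpha whose ideal alpha*O is
   invariant under every Galois automorphism sigma, i.e. sigma(alpha O) = alpha O. *)
Definition d_number (alpha : algC) : Prop :=
  alpha \in Aint /\
  forall (sigma : {rmorphism algC -> algC}) (x : algC),
    princ_ideal alpha x <-> exists2 z, princ_ideal alpha z & x = sigma z.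

Definition qsqrt2 (a b : rat) : algC := ratr a + ratr b * sqrtC 2.

(* Norm N_{Q(sqrt2)/Q}(a + b sqrt 2) = (a + b sqrt2)(a - b sqrt2) = a^2 - 2 b^2. *)
Definition norm_Qsqrt2 (a b : rat) : rat := a ^+ 2 - 2 * b ^+ 2.

(* Main.v *)
Require Import Defs.
From mathcomp Require Import all_boot all_order all_algebra all_field.
From mathcomp Require Import zify ring lra.
Import GRing.Theory Num.Theory Order.TTheory.
Local Open Scope ring_scope.


Lemma sigma_exists : exists u : {rmorphism algC -> algC}, u (sqrtC 2) = - sqrtC 2.
Proof.
pose z : algC := 4.-root (-1).
have z4 : z ^+ 4 = -1 by rewrite /z rootCK.
have z8 : z ^+ 8 = 1 by rewrite (exprM z 4 2) z4 expr2 mulrNN mulr1.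
have [u Hu] := Qn_aut_exists (isT : coprime 3 8).
pose t := z - z ^+ 3.
have ut : u t = - t.
  rewrite /t rmorphB rmorphXn /= Hu // -exprM.
  have -> : z ^+ (3 * 3) = z ^+ 8 * z by rewrite -exprSr.
  by rewrite z8 mul1r opprB.
have t2 : t ^+ 2 = 2.
  have -> : t ^+ 2 = z ^+ 2 * (1 + z ^+ 4) - 2 * z ^+ 4 by rewrite /t; ring.
  by rewrite z4 subrr mulr0 sub0r mulrN1 opprK.
have s2 : sqrtC (2 : algC) ^+ 2 = 2 by rewrite sqrtCK.
have : (sqrtC 2 - t) * (sqrtC 2 + t) = 0.
  by rewrite -subr_sqr s2 t2 subrr.
move/eqP; rewrite mulf_eq0 => /orP [|]; rewrite ?subr_eq0 ?addr_eq0 => /eqP ->; exists u.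
  by rewrite ut.
by rewrite rmorphN ut.
Qed.

Lemma dnum_conj (x : algC) (u : {rmorphism algC -> algC}) : d_number x ->
  exists y y', [/\ y \in Aint, y' \in Aint, u x = x * y & x = u x * y'].
Proof.
case=> Ax H.
have px : princ_ideal x x by exists 1; rewrite ?Aint1 ?mulr1.
have [y Ay Hy] : princ_ideal x (u x) by apply/(H u); exists x.
have [z [w Aw ->] Hz] := (H u x).1 px.
exists y, (u w); split => //; first by rewrite Aint_aut.
by rewrite {1}Hz rmorphM.
Qed.

Lemma sq_sum (x x' y y' : algC) : x' = x * y -> x = x' * y' ->
  (x + x') ^+ 2 = x * x' * (y + y' + 2).
Proof.
move=> Hx' Hx.
have e1 : x * x = x * x' * y' by rewrite -mulrA -Hx.
have e2 : x' * x' = x * x' * y by rewrite {1}Hx'; ring.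
have -> : (x + x') ^+ 2 = x * x + x' * x' + 2 * x * x' by ring.
by rewrite e1 e2; ring.
Qed.
Lemma key_int (t c c0 : int) (k : nat) :
  t ^+ 2 = c0 * 2 ^+ k -> c * (2 ^+ k - t + 1) = (t - 2) ^+ 2 ->
  4 * 2 ^+ k < t ^+ 2 -> 2 * t - 4 <= 2 ^+ k -> 4 <= t -> False.
Proof.
move=> Ht Hc HD HN Ht4.
case: k Ht Hc HD HN => [|k]; first by rewrite expr0 => *; lia.
have cop0 : forall u, coprimez 2 u -> coprimez ((2:int) ^+ k.+1) u.
  by move=> u; apply: coprimezXl.
have P2 : (2:int) ^+ k.+1 = 2 * 2 ^+ k by rewrite exprS.
rewrite P2 in cop0 *.
have Ppos : (0:int) < 2 ^+ k by rewrite exprn_gt0.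
move: ((2:int) ^+ k) Ppos cop0 => P Ppos cop0.
rewrite !expr2 => Ht Hc HD HN.
have [q Hq] : exists q, t = 2 * q.
  have h3 := divz_eq t 2; have h2 := modz_ge0 t (isT : (2:int) != 0).
  have h1 := ltz_pmod t (isT : (0:int) < 2).
  move: h1 h2 h3; move: (t %/ 2)%Z (t %% 2)%Z => q r h1 h2 h3.
  exists q; have [r0|r1] : r = 0 \/ r = 1 by lia.
    by rewrite h3 r0 addr0 mulrC.
  exfalso; rewrite h3 r1 in Ht.
  move/eqP: Ht; rewrite -subr_eq0 => /eqP E.
  have : 2*(2*(q*q+q) - c0*P) + 1 = 0 by rewrite -E; ring.
  lia.
have cop : coprimez (2 * P) (1 - t).
  apply: cop0; apply/coprimezP; exists (q, 1) => /=; lia.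
have Hd : (2 * P %| (c - 4) * (1 - t))%Z.
  apply/dvdzP; exists (c0 - c); nia.
rewrite Gauss_dvdzl // in Hd; case/dvdzP: Hd => e He.
have [e0|e1] : e <= 0 \/ 1 <= e by lia.
  nia.
nia.
Qed.

Lemma intrX (n : int) (k : nat) : ((n ^+ k)%:~R : algC) = n%:~R ^+ k.
Proof. by rewrite rmorphXn. Qed.
Lemma intr2 : ((2 : int)%:~R : algC) = 2. Proof. by rewrite rmorph_nat. Qed.
Lemma intr4 : ((4 : int)%:~R : algC) = 4. Proof. by rewrite rmorph_nat. Qed.
Lemma intr1' : ((1 : int)%:~R : algC) = 1. Proof. by rewrite rmorph1. Qed.

Lemma int_of (x : algC) : x \in Crat -> x \in Aint -> exists n : int, x = n%:~R.
Proof. by move=> Cx Ax; apply/intrP; apply: Cint_rat_Aint. Qed.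

Theorem propositionA4 (a b : rat) :
  d_number (qsqrt2 a b) ->
  (exists k : nat, norm_Qsqrt2 a b = 2 ^+ k) ->
  (forall sigma : {rmorphism algC -> algC}, 2 <= sigma (qsqrt2 a b)) ->
  d_number (qsqrt2 a b - 1) ->
  qsqrt2 a b \in Num.int.
Proof.
move=> Hd [k Hk] Hge Hd1.
have [u us] := sigma_exists.
have s2 : sqrtC (2 : algC) ^+ 2 = 2 by rewrite sqrtCK.
have Ha : 2 <= qsqrt2 a b := Hge idfun.
have Ub : u (qsqrt2 a b) = ratr a - ratr b * sqrtC 2.
  by rewrite /qsqrt2 rmorphD (fmorph_rat u a) rmorphM (fmorph_rat u b) us mulrN.
have Hb := Hge u; rewrite Ub in Hb.
have Ub1 : u (qsqrt2 a b - 1) = ratr a - ratr b * sqrtC 2 - 1.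
  by rewrite rmorphB rmorph1 Ub.
have [y [y' [Ay Ay' Ey Ey']]] := dnum_conj _ u Hd.
have [z [z' [Az Az' Ez Ez']]] := dnum_conj _ u Hd1.
rewrite Ub in Ey Ey'; rewrite Ub1 in Ez Ez'.
have HT := sq_sum _ _ _ _ Ey Ey'; have HM := sq_sum _ _ _ _ Ez Ez'.
case: (eqVneq b 0) => [b0 | bn0].
  have e : qsqrt2 a b = ratr a by rewrite /qsqrt2 b0 rmorph0 mul0r addr0.
  by apply: Cint_rat_Aint; [rewrite e Crat_rat | case: Hd].
exfalso.
have Aa : qsqrt2 a b \in Aint by case: Hd.
have Ab : ratr a - ratr b * sqrtC 2 \in Aint by rewrite -Ub Aint_aut; case: Hd.
move: Ha Hb HT HM Ay Ay' Az Az' Aa Ab.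
rewrite /qsqrt2.
move: (sqrtC 2) s2 => s s2.
have eN : (ratr a + ratr b * s) * (ratr a - ratr b * s) = 2 ^+ k.
  have := congr1 (@ratr algC) Hk; rewrite /norm_Qsqrt2 !(rmorphB, rmorphM, rmorphXn, rmorph_nat) /= => <-.
  by rewrite -s2; ring.
have eT : (ratr a + ratr b * s) + (ratr a - ratr b * s) = ratr a + ratr a by ring.
have D : 4 * 2 ^+ k < (ratr a + ratr b * s + (ratr a - ratr b * s)) ^+ 2.
  rewrite -subr_gt0 -eN.
  have -> : (ratr a + ratr b * s + (ratr a - ratr b * s)) ^+ 2 -
     4 * ((ratr a + ratr b * s) * (ratr a - ratr b * s)) = 4 * (ratr b) ^+ 2 * s ^+ 2 by ring.
  rewrite s2 mulr_gt0 // mulr_gt0 //.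
  by rewrite -(real_normK (x:=ratr b)) ?Creal_Crat ?Crat_rat // exprn_gt0 // normr_gt0 fmorph_eq0.
move: D eN eT.
move: (ratr a + ratr b * s) (ratr a - ratr b * s) => al be D eN eT Ha Hb HT HM Ay Ay' Az Az' Aa Ab.
have CT : al + be \in Crat by rewrite eT rpredD ?Crat_rat.
have AT : al + be \in Aint by rewrite rpredD.
have [t Et] := int_of _ CT AT.
have CN : al * be \in Crat by rewrite eN rpredX ?rpred_nat.
have N0 : al * be != 0 by rewrite eN expf_neq0 // pnatr_eq0.
have CQ : y + y' + 2 \in Crat.
  have -> : y + y' + 2 = (al + be) ^+ 2 / (al * be) by rewrite HT mulrC mulKf.
  by rewrite rpredM ?rpredV ?rpredX.
have AQ : y + y' + 2 \in Aint by rewrite !rpredD ?rpred_nat.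
have [c0 Ec0] := int_of _ CQ AQ.
have eM : (al - 1) * (be - 1) = al * be - (al + be) + 1 by ring.
have CM : (al - 1) * (be - 1) \in Crat by rewrite eM rpredD ?rpredB ?rpred1.
have M0 : (al - 1) * (be - 1) != 0.
  rewrite mulf_neq0 // subr_eq0 gt_eqF //.
    by apply: lt_le_trans Ha; rewrite ltr1n.
  by apply: lt_le_trans Hb; rewrite ltr1n.
have CQ' : z + z' + 2 \in Crat.
  have -> : z + z' + 2 = (al - 1 + (be - 1)) ^+ 2 / ((al - 1) * (be - 1)) by rewrite HM mulrC mulKf.
  have -> : al - 1 + (be - 1) = al + be - 2 by ring.
  by rewrite rpredM ?rpredV ?rpredX ?rpredB ?rpred_nat.
have AQ' : z + z' + 2 \in Aint by rewrite !rpredD ?rpred_nat.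
have [c Ec] := int_of _ CQ' AQ'.
have HM' : (al + be - 2) ^+ 2 = (al * be - (al + be) + 1) * (z + z' + 2).
  by rewrite -eM -HM; congr (_ ^+ 2); ring.
apply: (@key_int t c c0 k).
- apply: (@intr_inj algC); rewrite !(intrM, intrX, intr2).
  by rewrite -expr2 -Et -Ec0 HT eN mulrC.
- apply: (@intr_inj algC); rewrite intrM intrD intrB !intrX intrB !intr2 intr1'.
  by rewrite -Et -Ec -eN HM' mulrC.
- rewrite -(ltr_int algC) !(intrM, intrX, intr2, intr4) -Et.
  exact: D.
- rewrite -(ler_int algC) !(intrM, intrB, intrX, intr2, intr4) -Et -eN.
  have : 0 <= (al - 2) * (be - 2) by rewrite mulr_ge0 // subr_ge0.
  by rewrite -subr_ge0; congr (0 <= _); ring.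
- rewrite -(ler_int algC) intr4 -Et.
  have := lerD Ha Hb; congr (_ <= _); ring.
Qed.
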